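(* Let $n_1<n_2<n_3$ be positive integers with $\gcd(n_1,n_2,n_3)=1$ minimally generating a nonsymmetric numerical semigroup $S$, with $\gcd(\delta_1,\delta_3)=1$. Let $(x_1,x_3)\in\mathbb Z^2$ satisfy $x_1\delta_1+x_3\delta_3=i$ for some $i\in\{1,\ldots,\max\{\delta_1,\delta_3\}\}$, and let $(\tau_1,\tau_2,\tau_3)=x_1\mathbf v_1+x_3\mathbf v_3$. Then $x_1\le 0$ if and only if $\tau_2>0$.
   Context: $S=\langle n_1,n_2,n_3\rangle=\{a_1n_1+a_2n_2+a_3n_3:a_i\in\mathbb N\}$; minimally generated means no $n_i$ lies in the submonoid generated by the other two; $S$ is symmetric if, with $F=\max(\mathbb Z\setminus S)$, $x\in\mathbb Z\setminus S$ implies $F-x\in S$. For $\{i,j,k\}=\{1,2,3\}$, $c_i=\min\{c\in\mathbb Z^+: cn_i\in\langle n_j,n_k\rangle\}$ and, $S$ being nonsymmetric, $r_{ij},r_{ik}$ are the unique positive integers with $c_in_i=r_{ij}n_j+r_{ik}n_k$; moreover $c_i=r_{ji}+r_{ki}$. Set $\delta_1=c_1-r_{12}-r_{13}>0$, $\delta_3=r_{31}+r_{32}-c_3>0$, $\mathbf v_1=(c_1,-r_{12},-r_{13})$ and $\mathbf v_3=(r_{31},r_{32},-c_3)$. *)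

(* Defs.v *)
From Stdlib Require Import ZArith Lia.
Open Scope Z_scope.

Definition in2 (a b x : Z) : Prop :=
  exists p q : Z, 0 <= p /\ 0 <= q /\ x = p * a + q * b.

Definition inS (n1 n2 n3 x : Z) : Prop :=
  exists a1 a2 a3 : Z, 0 <= a1 /\ 0 <= a2 /\ 0 <= a3 /\
    x = a1 * n1 + a2 * n2 + a3 * n3.

Definition min_gen (n1 n2 n3 : Z) : Prop :=
  ~ in2 n2 n3 n1 /\ ~ in2 n1 n3 n2 /\ ~ in2 n1 n2 n3.

Definition is_frobenius (n1 n2 n3 F : Z) : Prop :=
  ~ inS n1 n2 n3 F /\ forall x, F < x -> inS n1 n2 n3 x.

Definition symmetric (n1 n2 n3 : Z) : Prop :=
  forall F, is_frobenius n1 n2 n3 F ->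
    forall x, ~ inS n1 n2 n3 x -> inS n1 n2 n3 (F - x).

Definition is_c (ni nj nk c : Z) : Prop :=
  0 < c /\ in2 nj nk (c * ni) /\
  forall c', 0 < c' -> in2 nj nk (c' * ni) -> c <= c'.

(* Main.v *)
Require Import Defs.
From Stdlib Require Import ZArith Lia.
Open Scope Z_scope.

Theorem lemma2p10 :
  forall n1 n2 n3 : Z,
    0 < n1 -> n1 < n2 -> n2 < n3 ->
    Z.gcd (Z.gcd n1 n2) n3 = 1 ->
    min_gen n1 n2 n3 ->
    ~ symmetric n1 n2 n3 ->
  forall c1 r12 r13 c3 r31 r32 : Z,
    is_c n1 n2 n3 c1 ->
    0 < r12 -> 0 < r13 -> c1 * n1 = r12 * n2 + r13 * n3 ->
    is_c n3 n1 n2 c3 ->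
    0 < r31 -> 0 < r32 -> c3 * n3 = r31 * n1 + r32 * n2 ->
  let d1 := c1 - r12 - r13 in
  let d3 := r31 + r32 - c3 in
    Z.gcd d1 d3 = 1 ->
  forall x1 x3 i : Z,
    1 <= i <= Z.max d1 d3 ->
    x1 * d1 + x3 * d3 = i ->
  (* (tau1, tau2, tau3) = x1 * (c1, -r12, -r13) + x3 * (r31, r32, -c3) *)
  let tau2 := x1 * (- r12) + x3 * r32 in
    (x1 <= 0 <-> 0 < tau2).
Proof.
  intros n1 n2 n3 h1 h12 h23 _ _ _ c1 r12 r13 c3 r31 r32 _ hr12 hr13 e1 _ hr31 hr32 e3
    d1 d3 _ x1 x3 i hi hx tau2.
  assert (hd1 : 0 < d1).
  { unfold d1.
    assert ((c1 - r12 - r13) * n1 = r12 * (n2 - n1) + r13 * (n3 - n1)) by lia.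
    assert (0 < r12 * (n2 - n1)) by nia.
    assert (0 < r13 * (n3 - n1)) by nia.
    nia. }
  assert (hd3 : 0 < d3).
  { unfold d3.
    assert ((r31 + r32 - c3) * n3 = r31 * (n3 - n1) + r32 * (n3 - n2)) by lia.
    assert (0 < r31 * (n3 - n1)) by nia.
    assert (0 < r32 * (n3 - n2)) by nia.
    nia. }
  unfold tau2; split; intro H.
  - assert (x3 >= 1) by nia. nia.
  - destruct (Z.le_gt_cases x1 0) as [|Hx1]; [assumption|].
    exfalso.
    destruct (Z.le_gt_cases x3 0).
    + nia.
    + assert (x1 * d1 >= d1) by nia.
      assert (x3 * d3 >= d3) by nia.
      destruct (Z.max_spec d1 d3) as [[_ M]|[_ M]]; lia.
Qed.
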